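(* For every integer $n\geq 1$, the sequence $\Lambda_n$ of chains (defined in the context) is a 3-Gray code, i.e., any two consecutive chains in $\Lambda_n$, viewed as strings over the alphabet $\{0,1,*\}$, differ in at most three positions.
   Context: Let $D$ be the set of all bitstrings (including the empty string $\varepsilon$) with equally many $0$s and $1$s such that every prefix contains at least as many $0$s as $1$s. Each chain of the Greene–Kleitman symmetric chain decomposition of $Q_n$ (the hypercube on $\{0,1\}^n$) is encoded as a string of length $n$ over $\{0,1,*\}$ of the form $u_0*u_1*\cdots*u_{h-1}*u_h$ with $u_0,\ldots,u_h\in D$; its vertices are obtained by replacing the $*$s by $i$ ones followed by $h-i$ zeros, $i=0,\ldots,h$, and every such string occurs as a chain. The length $|C|$ of a chain $C$ is its number of $*$s. For a string $C$ over $\{0,1,*\}$ with at least two $*$s, $f(C)$ (resp. $\ell(C)$) denotes the string obtained by replacing the first two (resp. last two) $*$s by $0$ and $1$, respectively. For a sequence $\Gamma$, $\Gamma^R$ is its reversal, and $*C*$, $0C1$ denote concatenations. The sequences $\Lambda_n$ are defined inductively: for even $n$, $\Lambda_0:=\varepsilon$ (the one-element sequence consisting of the empty chain) and for odd $n$, $\Lambda_1:=*$. For $n\ge 0$, given $\Lambda_n=C_1,\ldots,C_N$, set $\Lambda_{n+2}:=\rho(C_1),\ldots,\rho(C_N)$ (concatenation of sequences), where $\rho(C):=\lambda(C)$ if $|C|\equiv n \pmod 4$ and $\rho(C):=\lambda(C)^R$ otherwise, and where for even $n$: $\lambda(C):= *C*,\ f( *C* ),\ f(\ell( *C* )),\ \ell(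 *C* )$ if $|C|\ge 2$, and $\lambda(C):=*C*,\ 0C1$ if $|C|=0$; for odd $n$: $\lambda(C):=*C*,\ \ell( *C* ),\ \ell(f( *C* )),\ f( *C* )$ if $|C|\ge 3$, and $\lambda(C):=*C*,\ \ell( *C* ),\ f( *C* )$ if $|C|=1$. *)

(* Defs.v *)
From HB Require Import structures.
From mathcomp Require Import all_boot.
Set Implicit Arguments. Unset Strict Implicit. Unset Printing Implicit Defensive.

Inductive sym := Zero | One | Star.

Definition sym_eqb (a b : sym) : bool :=
  match a, b with
  | Zero, Zero | One, One | Star, Star => true
  | _, _ => false
  end.

Lemma sym_eqP : Equality.axiom sym_eqb.
Proof. by case; case; constructor. Qed.

HB.instance Definition _ := hasDecEq.Build sym sym_eqP.

Definition chain := seq sym.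

Definition clen (C : chain) : nat := count (pred1 Star) C.

Fixpoint repl2 (a b : sym) (k : nat) (s : chain) : chain :=
  match s with
  | [::] => [::]
  | x :: s' =>
      if x == Star then
        match k with
        | 0 => a :: repl2 a b 1 s'
        | 1 => b :: s'
        | _ => x :: s'
        end
      else x :: repl2 a b k s'
  end.

Definition fC (C : chain) : chain := repl2 Zero One 0 C.
(* l(C): last two stars replaced by 0 and 1 respectively *)
Definition lC (C : chain) : chain := rev (repl2 One Zero 0 (rev C)).

Definition wrap (C : chain) : chain := Star :: rcons C Star.

Definition lam (n : nat) (C : chain) : seq chain :=
  if ~~ odd n then
    (if 2 <= clen C then
       [:: wrap C; fC (wrap C); fC (lC (wrap C)); lC (wrap C)]
     else [:: wrap C; Zero :: rcons C One])
  else
    (if 3 <= clen C then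
       [:: wrap C; lC (wrap C); lC (fC (wrap C)); fC (wrap C)]
     else [:: wrap C; lC (wrap C); fC (wrap C)]).

Definition rho (n : nat) (C : chain) : seq chain :=
  if clen C == n %[mod 4] then lam n C else rev (lam n C).

Fixpoint Lambda (n : nat) : seq chain :=
  match n with
  | 0 => [:: [::]]
  | 1 => [:: [:: Star]]
  | m.+2 => flatten [seq rho m C | C <- Lambda m]
  end.

(* number of positions in which two strings differ
   (positions beyond the end of the shorter string count as differing) *)
Definition ndiff (s t : chain) : nat :=
  count (fun i => onth s i != onth t i) (iota 0 (maxn (size s) (size t))).

Definition gray_code (k : nat) (L : seq chain) : Prop :=
  forall i, i.+1 < size L -> ndiff (nth [::] L i) (nth [::] L i.+1) <= k.

(* Main.v *)
Require Import Defs.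
From mathcomp Require Import all_boot.
From mathcomp Require Import zify.
Set Implicit Arguments. Unset Strict Implicit. Unset Printing Implicit Defensive.


Notation wrapc := Defs.wrap.
Definition col := (sym * sym)%type.
Definition SS : col := (Star, Star).

Definition stp (a b : sym) (k : nat) (x : sym) : sym :=
  if x == Star then match k with 0 => a | 1 => b | _ => x end else x.
Definition nk (k : nat) (x : sym) : nat := if x == Star then k.+1 else k.

Fixpoint rr (a b : sym) (k : nat) (s : chain) : chain :=
  match s with
  | [::] => [::]
  | x :: s' => stp a b k x :: rr a b (nk k x) s'
  end.

Fixpoint r2P (a1 b1 a2 b2 : sym) (k1 k2 : nat) (W : seq col) : seq col :=
  match W with
  | [::] => [::]
  | c :: W' => (stp a1 b1 k1 c.1, stp a2 b2 k2 c.2) :: r2P a1 b1 a2 b2 (nk k1 c.1) (nk k2 c.2) W'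
  end.

Lemma rr_done a b k s : 1 < k -> rr a b k s = s.
Proof.
elim: s k => [|x s IH] k hk //=.
rewrite IH; last by rewrite /nk; case: ifP => _; lia.
by rewrite /stp; case: ifP => [/eqP ->|//]; case: k hk => [|[|k]].
Qed.

Lemma repl2_rr a b k s : k <= 1 -> repl2 a b k s = rr a b k s.
Proof.
elim: s k => [|x s IH] k hk //=.
rewrite /stp /nk; case: ifP => hx.
  case: k hk => [|[|k]] hk //=; first by rewrite IH.
  by rewrite rr_done.
by rewrite IH.
Qed.

Lemma rr_star k s : rr Star Star k s = s.
Proof.
elim: s k => [|x s IH] k //=; rewrite IH /stp.
by case: ifP => [/eqP ->|//]; case: k => [|[|k]].
Qed.

Lemma zip_rr a1 b1 a2 b2 k1 k2 A B :
  zip (rr a1 b1 k1 A) (rr a2 b2 k2 B) = r2P a1 b1 a2 b2 k1 k2 (zip A B).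
Proof.
by elim: A B k1 k2 => [|x A IH] [|y B] k1 k2 //=; rewrite IH.
Qed.

Lemma size_rr a b k s : size (rr a b k s) = size s.
Proof. by elim: s k => [|x s IH] k //=; rewrite IH. Qed.

Definition inert (c : col) : bool := (c.1 == c.2) && (c.1 != Star).
Definition cmp (W : seq col) : seq col := filter (predC inert) W.

Lemma cmp_r2P a1 b1 a2 b2 k1 k2 W :
  cmp (r2P a1 b1 a2 b2 k1 k2 W) = cmp (r2P a1 b1 a2 b2 k1 k2 (cmp W)).
Proof.
elim: W k1 k2 => [|[x y] W IH] k1 k2 //=.
rewrite /cmp /=; case hi: (inert (x, y)) => /=.
  move: hi; rewrite /inert /= => /andP [/eqP <- hx].
  rewrite /stp /nk (negbTE hx) /= eqxx hx /=.
  exact: IH.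
by case: ifP => _; rewrite -/(cmp _) IH.
Qed.

Lemma cmp_rev W : cmp (rev W) = rev (cmp W).
Proof. by rewrite /cmp filter_rev. Qed.

Lemma cmp_cat u v : cmp (u ++ v) = cmp u ++ cmp v.
Proof. by rewrite /cmp filter_cat. Qed.

Lemma cmp_nseq k : cmp (nseq k SS) = nseq k SS.
Proof. by elim: k => //= k ->. Qed.

Definition fS (a b : sym) (s : chain) : chain := rr a b 0 s.
Definition lS (a b : sym) (s : chain) : chain := rev (rr a b 0 (rev s)).
Definition fW a1 b1 a2 b2 (W : seq col) := r2P a1 b1 a2 b2 0 0 W.
Definition lW a1 b1 a2 b2 (W : seq col) := rev (r2P a1 b1 a2 b2 0 0 (rev W)).

Lemma fC_fS C : fC C = fS Zero One C.
Proof. by rewrite /fC repl2_rr. Qed.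
Lemma lC_lS C : lC C = lS One Zero C.
Proof. by rewrite /lC repl2_rr. Qed.
Lemma fS_star s : fS Star Star s = s. Proof. exact: rr_star. Qed.
Lemma lS_star s : lS Star Star s = s. Proof. by rewrite /lS rr_star revK. Qed.
Lemma size_fS a b s : size (fS a b s) = size s. Proof. exact: size_rr. Qed.
Lemma size_lS a b s : size (lS a b s) = size s.
Proof. by rewrite /lS size_rev size_rr size_rev. Qed.

Lemma zip_fS a1 b1 a2 b2 A B :
  zip (fS a1 b1 A) (fS a2 b2 B) = fW a1 b1 a2 b2 (zip A B).
Proof. exact: zip_rr. Qed.

Lemma zip_lS a1 b1 a2 b2 A B : size A = size B ->
  zip (lS a1 b1 A) (lS a2 b2 B) = lW a1 b1 a2 b2 (zip A B).
Proof.
move=> hs; rewrite /lS /lW -rev_zip; last by rewrite !size_rr !size_rev.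
by rewrite zip_rr rev_zip.
Qed.

Lemma cmp_fW a1 b1 a2 b2 W : cmp (fW a1 b1 a2 b2 W) = cmp (fW a1 b1 a2 b2 (cmp W)).
Proof. exact: cmp_r2P. Qed.
Lemma cmp_lW a1 b1 a2 b2 W : cmp (lW a1 b1 a2 b2 W) = cmp (lW a1 b1 a2 b2 (cmp W)).
Proof. by rewrite /lW !cmp_rev cmp_r2P cmp_rev. Qed.

Definition wrapW (W : seq col) : seq col := SS :: rcons W SS.
Lemma zip_wrap A B : size A = size B -> zip (wrapc A) (wrapc B) = wrapW (zip A B).
Proof. by move=> h; rewrite /wrapc /wrapW /= zip_rcons. Qed.
Lemma cmp_wrap W : cmp (wrapW W) = wrapW (cmp W).
Proof. by rewrite /wrapW /cmp /= filter_rcons /=. Qed.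

Definition cw (A B : chain) := cmp (zip A B).

Lemma cw_same A : cw A A = nseq (clen A) SS.
Proof.
rewrite /cw /clen; elim: A => //= x A IH.
rewrite /cmp /= -/(cmp _) IH /inert /= eqxx /=.
by case: x.
Qed.


Lemma size_wrap A : size (wrapc A) = (size A).+2.
Proof. by rewrite /wrapc /= size_rcons. Qed.

Lemma cw_wrap A B : size A = size B -> cw (wrapc A) (wrapc B) = wrapW (cw A B).
Proof. by move=> h; rewrite /cw zip_wrap // cmp_wrap. Qed.

Lemma cw_fwrap a1 b1 a2 b2 A B : size A = size B ->
  cw (fS a1 b1 (wrapc A)) (fS a2 b2 (wrapc B)) = cmp (fW a1 b1 a2 b2 (wrapW (cw A B))).
Proof. by move=> h; rewrite /cw zip_fS cmp_fW zip_wrap // cmp_wrap. Qed.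

Lemma cw_lwrap a1 b1 a2 b2 A B : size A = size B ->
  cw (lS a1 b1 (wrapc A)) (lS a2 b2 (wrapc B)) = cmp (lW a1 b1 a2 b2 (wrapW (cw A B))).
Proof.
by move=> h; rewrite /cw zip_lS ?size_wrap ?h // cmp_lW zip_wrap // cmp_wrap.
Qed.

Lemma cw_FL a1 b1 c1 d1 a2 b2 c2 d2 X :
  cw (fS a1 b1 (lS c1 d1 X)) (fS a2 b2 (lS c2 d2 X)) =
  cmp (fW a1 b1 a2 b2 (lW c1 d1 c2 d2 (nseq (clen X) SS))).
Proof.
by rewrite /cw zip_fS cmp_fW zip_lS // cmp_lW [RHS]cmp_fW [in RHS]cmp_lW cmp_nseq -cw_same.
Qed.

Lemma cw_LF a1 b1 c1 d1 a2 b2 c2 d2 X :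
  cw (lS a1 b1 (fS c1 d1 X)) (lS a2 b2 (fS c2 d2 X)) =
  cmp (lW a1 b1 a2 b2 (fW c1 d1 c2 d2 (nseq (clen X) SS))).
Proof.
by rewrite /cw zip_lS ?size_fS // cmp_lW zip_fS cmp_fW [RHS]cmp_lW [in RHS]cmp_fW cmp_nseq -cw_same.
Qed.

Lemma ndiffE s t : size s = size t ->
  ndiff s t = count (fun c : col => c.1 != c.2) (zip s t).
Proof.
rewrite /ndiff; elim: s t => [|x s IH] [|y t] //= [hs].
rewrite hs maxnn /= -(IH t hs) hs maxnn.
rewrite -[1]addn0 iotaDl count_map; congr (_ + _).
Qed.

Lemma ndiff_cw s t : size s = size t ->
  ndiff s t = count (fun c : col => c.1 != c.2) (cw s t).
Proof.
move=> h; rewrite ndiffE // /cw /cmp count_filter.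
apply: eq_count => -[x y] /=; rewrite /inert /=.
by case: eqP => //= _; rewrite andbT.
Qed.

Definition cA (W : seq col) := count (fun c : col => c.1 == Star) W.
Definition cB (W : seq col) := count (fun c : col => c.2 == Star) W.

Lemma clen_cwA s t : size s = size t -> clen s = cA (cw s t).
Proof.
rewrite /cA /cw /cmp count_filter /clen.
elim: s t => [|x s IH] [|y t] //= [hs]; rewrite (IH t) //; congr (_ + _).
rewrite /inert /=; case: x; case: y => //.
Qed.

Lemma clen_cwB s t : size s = size t -> clen t = cB (cw s t).
Proof.
rewrite /cB /cw /cmp count_filter /clen.
elim: s t => [|x s IH] [|y t] //= [hs]; rewrite (IH t) //; congr (_ + _).
rewrite /inert /=; case: x; case: y => //.
Qed.


Definition P1 : seq col := [:: (Star,Zero); (Star,One)].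
Definition P1' : seq col := [:: (Zero,Star); (One,Star)].
Definition P2 : seq col := [:: (Star,Zero); (Star,Zero); (Zero,One)].
Definition P2' : seq col := [:: (Zero,Star); (Zero,Star); (One,Zero)].
Definition P3 : seq col := [:: (Star,Zero); (Zero,One); (One,Star)].
Definition P3' : seq col := [:: (Zero,Star); (One,Zero); (Star,One)].

Definition okP (n l t : nat) (P : seq col) : Prop :=
  ((P = P1 \/ P = P1' \/ P = P2 \/ P = P2') /\
     (odd n -> l = 0 -> (t + cB P) %% 4 = n %% 4))
  \/ (P = P3 /\ l = 0 /\ t = 0 /\ n %% 4 = 3)
  \/ (P = P3' /\ l = 0 /\ t = 0 /\ n %% 4 = 1).

Definition Inv (n : nat) (A B : chain) : Prop :=
  size A = size B /\
  exists l t P, cw A B = nseq l SS ++ P ++ nseq t SS /\ okP n l t P.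

Lemma Inv_ndiff n A B : Inv n A B -> ndiff A B <= 3.
Proof.
move=> [hs [l [t [P [hc hP]]]]]; rewrite ndiff_cw // hc !count_cat !count_nseq /=.
case: hP => [[hP _]|[[-> _]|[-> _]]] //; by case: hP => [->|[->|[->|->]]].
Qed.


Lemma r2P_done a1 b1 a2 b2 k1 k2 W :
  (1 < k1 \/ (a1 = Star /\ b1 = Star)) -> (1 < k2 \/ (a2 = Star /\ b2 = Star)) ->
  r2P a1 b1 a2 b2 k1 k2 W = W.
Proof.
elim: W k1 k2 => [|[x y] W IH] k1 k2 //= h1 h2.
have stpid : forall a b k z, (1 < k \/ (a = Star /\ b = Star)) -> stp a b k z = z.
  move=> a b k z [hk|[-> ->]]; rewrite /stp; case: ifP => [/eqP ->|//].
    by case: k hk => [|[|k]].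
  by case: k => [|[|k]].
have nkok : forall a b k z, (1 < k \/ (a = Star /\ b = Star)) ->
    (1 < nk k z \/ (a = Star /\ b = Star)).
  move=> a b k z [hk|hab]; last by right.
  by left; rewrite /nk; case: ifP => _; lia.
by rewrite !stpid // IH //; apply: nkok.
Qed.

Lemma cmpSS W : cmp (SS :: W) = SS :: cmp W. Proof. by []. Qed.
Lemma rev_wrapW W : rev (wrapW W) = wrapW (rev W).
Proof. by rewrite /wrapW rev_cons rev_rcons. Qed.
Lemma nseq_rc k : rcons (nseq k SS) SS = SS :: nseq k SS.
Proof. by elim: k => //= k ->. Qed.

Lemma E1 l t P : cmp P = P ->
  cmp (lW One Zero One Zero (wrapW (nseq l SS ++ P ++ nseq t.+1 SS))) =
  nseq l.+1 SS ++ P ++ nseq t SS.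
Proof.
move=> hP.
rewrite /lW rev_wrapW !rev_cat !rev_nseq /wrapW /= r2P_done; [|by left|by left].
rewrite cmp_rev /cmp /= -/(cmp _) -cats1 !cmp_cat cmp_nseq -/(cmp _) cmp_rev hP.
by rewrite cmp_nseq /= cats1 rev_rcons !rev_cat !rev_nseq revK.
Qed.

Lemma cmp_nseq_cat k W : cmp (nseq k SS ++ W) = nseq k SS ++ cmp W.
Proof. by rewrite cmp_cat cmp_nseq. Qed.

Lemma rc (x : col) W : rev (x :: W) = rev W ++ [:: x].
Proof. by rewrite rev_cons cats1. Qed.

Ltac done2 := rewrite r2P_done; [|by left|by left].

Lemma E2 l P : (P = P1 \/ P = P1' \/ P = P2 \/ P = P2') ->
  cmp (lW One Zero One Zero (wrapW (nseq l SS ++ P ++ nseq 0 SS))) =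
  nseq l SS ++ (if P1 == P then P2 else if P2 == P then P2 else P2') ++ nseq 0 SS.
Proof.
rewrite /lW rev_wrapW cats0 rev_cat rev_nseq /wrapW rcons_cat nseq_rc.
by case=> [->|[->|[->|->]]] /=; done2; rewrite /stp /nk /= cmp_rev /= cmp_nseq !rc rev_nseq -!catA.
Qed.

Lemma E3 l t P : cmp P = P ->
  cmp (fW Zero One Zero One (wrapW (nseq l.+1 SS ++ P ++ nseq t SS))) =
  nseq l SS ++ P ++ nseq t.+1 SS.
Proof.
move=> hP; rewrite /fW /wrapW /=; done2.
by rewrite /stp /nk /= !rcons_cat nseq_rc !cmp_cat cmp_nseq hP /= cmp_nseq.
Qed.

Lemma E4 : cmp (fW Star Star Zero One (wrapW (nseq 0 SS ++ P3 ++ nseq 0 SS))) =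
  nseq 0 SS ++ P2 ++ nseq 1 SS.
Proof. by []. Qed.

Lemma E5 : cmp (fW Zero One Star Star (wrapW (nseq 0 SS ++ P3' ++ nseq 0 SS))) =
  nseq 0 SS ++ P2' ++ nseq 1 SS.
Proof. by []. Qed.

Lemma wrapW_form l t P : wrapW (nseq l SS ++ P ++ nseq t SS) = nseq l.+1 SS ++ P ++ nseq t.+1 SS.
Proof. by rewrite /wrapW /= !rcons_cat nseq_rc. Qed.

Lemma cA_form l t P : cA (nseq l SS ++ P ++ nseq t SS) = l + cA P + t.
Proof. by rewrite /cA !count_cat !count_nseq /= !mul1n addnA. Qed.
Lemma cB_form l t P : cB (nseq l SS ++ P ++ nseq t SS) = l + cB P + t.
Proof. by rewrite /cB !count_cat !count_nseq /= !mul1n addnA. Qed.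


Definition fwd (n : nat) (C : chain) : bool := clen C %% 4 == n %% 4.
Definition gend (n : nat) (C : chain) : chain :=
  if odd n then fS Zero One (wrapc C) else lS One Zero (wrapc C).
Definition lastR n C := if fwd n C then gend n C else wrapc C.
Definition headR n C := if fwd n C then wrapc C else gend n C.

Lemma odd_mod2 a b : odd a = odd b -> a %% 2 = b %% 2.
Proof. by rewrite !modn2 => ->. Qed.

Lemma fam_cmp P : (P = P1 \/ P = P1' \/ P = P2 \/ P = P2') -> cmp P = P.
Proof. by case=> [->|[->|[->|->]]]. Qed.

Lemma fam_cnt P : (P = P1 \/ P = P1' \/ P = P2 \/ P = P2') ->
  (cA P = 2 /\ cB P = 0) \/ (cA P = 0 /\ cB P = 2).
Proof. by case=> [->|[->|[->|->]]]; [left|right|left|right]. Qed.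

Lemma trans n C C' : size C = size C' -> odd (clen C) = odd n -> odd (clen C') = odd n ->
  Inv n C C' -> Inv n.+2 (lastR n C) (headR n C').
Proof.
move=> hs pC pC' [_ [l [t [P [hc hP]]]]].
have eA : clen C = l + cA P + t by rewrite (clen_cwA hs) hc cA_form.
have eB : clen C' = l + cB P + t by rewrite (clen_cwB hs) hc cB_form.
move/odd_mod2: pC => pC; move/odd_mod2: pC' => pC'.
split.
  rewrite /lastR /headR /gend; repeat case: ifP => _;
  by rewrite ?size_fS ?size_lS !size_wrap hs.
case: hP => [[hP hodd]|[[eP [hl [ht hn]]]|[eP [hl [ht hn]]]]]; try subst P.
- have hcmp := fam_cmp hP; have hcnt := fam_cnt hP.
  rewrite /lastR /headR /fwd.
  case: eqP => e1; case: eqP => e2.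
  + exfalso; case: hcnt => -[h1 h2]; lia.
  + rewrite /gend; case hn: (odd n).
    * case: l hc eA eB hodd => [|l] hc eA eB hodd.
        by exfalso; have := hodd hn erefl; lia.
      rewrite cw_fwrap // hc E3 //.
      exists l, t.+1, P; split => //; left; split => // _ hl.
      lia.
    * case: t hc eA eB hodd => [|t] hc eA eB hodd.
        rewrite cw_lwrap // hc E2 //.
        eexists; eexists; eexists; split; first reflexivity.
        left; split; last by rewrite /= hn.
        by case: hP => [->|[->|[->|->]]]; auto.
      rewrite cw_lwrap // hc E1 //.
      exists l.+1, t, P; split => //; left; split => //; by rewrite /= hn.
  + rewrite cw_wrap // hc wrapW_form.
    by exists l.+1, t.+1, P; split => //; left.
  + exfalso; case: hcnt => -[h1 h2]; lia.
- have hodd : odd n.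
    have h2 : n %% 2 = 1 by lia.
    by move: h2; rewrite modn2; case: (odd n).
  move: hc eA eB; rewrite hl ht => hc eA eB.
  rewrite /lastR /headR /fwd /gend hodd eA eB /=.
  have -> : (1 %% 4 == n %% 4) = false by apply/eqP; lia.
  rewrite -{1}(fS_star (wrapc C)) cw_fwrap // hc E4.
  exists 0, 1, P2; split => //; left; split; first by auto.
  by move=> _ _ /=; lia.
- have hodd : odd n.
    have h2 : n %% 2 = 1 by lia.
    by move: h2; rewrite modn2; case: (odd n).
  move: hc eA eB; rewrite hl ht => hc eA eB.
  rewrite /lastR /headR /fwd /gend hodd eA eB /=.
  have -> : (1 %% 4 == n %% 4) = true by apply/eqP; lia.
  rewrite -[X in cw _ X](fS_star (wrapc C')) cw_fwrap // hc E5.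
  exists 0, 1, P2'; split => //; left; split; first by auto.
  by move=> _ _ /=; lia.
Qed.


Lemma fW_SS2 a1 b1 a2 b2 W :
  fW a1 b1 a2 b2 (SS :: SS :: W) = (a1,a2) :: (b1,b2) :: W.
Proof. by rewrite /fW /= r2P_done // /stp /nk /=; left. Qed.

Lemma lW_SS2 a1 b1 a2 b2 W :
  lW a1 b1 a2 b2 (W ++ [:: SS; SS]) = W ++ [:: (b1,b2); (a1,a2)].
Proof.
rewrite /lW rev_cat /= r2P_done; [|by left|by left]; rewrite /stp /nk /= !rc revK -catA.
by [].
Qed.

Lemma nseq2r k : nseq k.+2 SS = nseq k SS ++ [:: SS; SS].
Proof. by rewrite -addn2 nseqD. Qed.

Lemma InvFL n X A B a1 b1 c1 d1 a2 b2 c2 d2 l t P :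
  A = fS a1 b1 (lS c1 d1 X) -> B = fS a2 b2 (lS c2 d2 X) ->
  cmp (fW a1 b1 a2 b2 (lW c1 d1 c2 d2 (nseq (clen X) SS))) = nseq l SS ++ P ++ nseq t SS ->
  okP n l t P -> Inv n A B.
Proof.
move=> -> -> h ok; split; first by rewrite !size_fS !size_lS.
by exists l, t, P; rewrite cw_FL h.
Qed.

Lemma InvLF n X A B a1 b1 c1 d1 a2 b2 c2 d2 l t P :
  A = lS a1 b1 (fS c1 d1 X) -> B = lS a2 b2 (fS c2 d2 X) ->
  cmp (lW a1 b1 a2 b2 (fW c1 d1 c2 d2 (nseq (clen X) SS))) = nseq l SS ++ P ++ nseq t SS ->
  okP n l t P -> Inv n A B.
Proof.
move=> -> -> h ok; split; first by rewrite !size_lS !size_fS.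
by exists l, t, P; rewrite cw_LF h.
Qed.

Lemma clen_wrap C : clen (wrapc C) = (clen C).+2.
Proof. by rewrite /clen /wrapc /= -cats1 count_cat /= addn1. Qed.

Fixpoint chainP (R : chain -> chain -> Prop) (s : seq chain) : Prop :=
  match s with
  | x :: s' => (if s' is y :: _ then R x y else True) /\ chainP R s'
  | [::] => True
  end.

Lemma lam0 C : clen C = 0 -> Zero :: rcons C One = lS One Zero (wrapc C).
Proof.
rewrite /clen /lS /wrapc => h.
have hr : count (pred1 Star) (rev C) = 0 by rewrite count_rev.
rewrite rev_cons rev_rcons /=.
have -> : rr One Zero 1 (rcons (rev C) Star) = rcons (rev C) Zero.
  elim: (rev C) hr => [|x s IH] //= hx.
  have hx1 : (x == Star) = false by move: hx; case: (x == Star).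
  by rewrite /stp /nk hx1 IH //; move: hx; rewrite hx1.
by rewrite /stp /= rev_cons rev_rcons revK.
Qed.


Lemma clen_rr a b k s : a != Star -> b != Star -> k <= 2 ->
  clen (rr a b k s) = clen s - (2 - k).
Proof.
move=> ha hb; elim: s k => [|x s IH] k hk /=; first by rewrite /clen.
case: k hk => [|[|[|k]]] hk; last by rewrite rr_done.
- rewrite /clen /= /stp /nk -/(clen s); case hx: (x == Star) => /=;
  rewrite ?hx ?(negbTE ha) -/(clen _) IH //; lia.
- rewrite /clen /= /stp /nk -/(clen s); case hx: (x == Star) => /=;
  rewrite ?hx ?(negbTE hb) -/(clen _) ?IH ?rr_done //; lia.
- rewrite /clen /= /stp /nk -/(clen s); case hx: (x == Star) => /=;
  rewrite ?hx -/(clen _) ?rr_done //; lia.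
Qed.

Lemma clen_fS a b s : a != Star -> b != Star -> clen (fS a b s) = clen s - 2.
Proof. by move=> ha hb; rewrite /fS clen_rr. Qed.
Lemma clen_lS a b s : a != Star -> b != Star -> clen (lS a b s) = clen s - 2.
Proof. by move=> ha hb; rewrite /lS /clen count_rev -/(clen _) clen_rr // /clen count_rev. Qed.

Lemma fW_id W : fW Star Star Star Star W = W.
Proof. by rewrite /fW r2P_done //; right. Qed.
Lemma lW_id W : lW Star Star Star Star W = W.
Proof. by rewrite /lW r2P_done ?revK //; right. Qed.
Lemma nseqSS k : nseq k.+2 SS = SS :: SS :: nseq k SS.
Proof. by []. Qed.
Lemma lW_SS2c a1 b1 a2 b2 x y W :
  lW a1 b1 a2 b2 (x :: y :: (W ++ [:: SS; SS])) = x :: y :: W ++ [:: (b1,b2); (a1,a2)].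
Proof. by rewrite -!cat_cons lW_SS2. Qed.
Lemma fW_SS2c a1 b1 a2 b2 W V :
  fW a1 b1 a2 b2 ((SS :: SS :: W) ++ V) = (a1,a2) :: (b1,b2) :: W ++ V.
Proof. by rewrite cat_cons cat_cons fW_SS2. Qed.

Lemma LF_nseq a1 b1 a2 b2 c1 d1 c2 d2 j :
  lW a1 b1 a2 b2 (fW c1 d1 c2 d2 (nseq j.+4 SS)) =
  (c1,c2) :: (d1,d2) :: nseq j SS ++ [:: (b1,b2); (a1,a2)].
Proof. by rewrite nseqSS fW_SS2 nseq2r lW_SS2c. Qed.
Lemma FL_nseq a1 b1 a2 b2 c1 d1 c2 d2 j :
  fW a1 b1 a2 b2 (lW c1 d1 c2 d2 (nseq j.+4 SS)) =
  (a1,a2) :: (b1,b2) :: nseq j SS ++ [:: (d1,d2); (c1,c2)].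
Proof. by rewrite nseq2r lW_SS2 nseqSS fW_SS2c. Qed.

Lemma nseq_SS2 k : nseq k SS ++ [:: (Star,Star); (Star,Star)] = SS :: SS :: nseq k SS.
Proof. by elim: k => //= k ->. Qed.

Ltac eqs := by rewrite ?fS_star ?lS_star.
Ltac comp hm := rewrite ?clen_wrap hm ?LF_nseq ?FL_nseq /cmp /= -/(cmp _) ?cmp_cat ?cmp_nseq /= ?cats0 ?nseq_SS2 //.
Ltac okt := rewrite /okP /=; first [ left; split; [by auto 6 | intros; first [lia | match goal with H : is_true (odd ?n), H' : is_true (~~ odd ?n) |- _ => by rewrite H in H' end]]
  | right; left; do 3 (split => //); lia | right; right; do 3 (split => //); lia ].
Ltac LF a1 b1 c1 d1 a2 b2 c2 d2 l t P hm C :=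
  apply: (InvLF (X := wrapc C) (a1 := a1) (b1:=b1) (c1:=c1) (d1:=d1) (a2:=a2) (b2:=b2) (c2:=c2) (d2:=d2) (l := l) (t := t) (P := P)); [eqs|eqs|comp hm|okt].
Ltac FL a1 b1 c1 d1 a2 b2 c2 d2 l t P hm C :=
  apply: (InvFL (X := wrapc C) (a1 := a1) (b1:=b1) (c1:=c1) (d1:=d1) (a2:=a2) (b2:=b2) (c2:=c2) (d2:=d2) (l := l) (t := t) (P := P)); [eqs|eqs|comp hm|okt].

Lemma block_odd n C k : odd n -> clen C %% 2 = n %% 2 -> clen C = k.+3 -> chainP (Inv n.+2) (rho n C).
Proof.
move=> hn hp hm; have hn2 : n %% 2 = 1 by rewrite modn2 hn.
rewrite /rho /lam hn /= hm /= !fC_fS !lC_lS -hm.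
case: ifP => hf /=.
- move/eqP: hf => hf.
  refine (conj _ (conj _ (conj _ (conj I I)))).
  + LF Star Star Star Star One Zero Star Star k.+3 0 P1 hm C.
  + LF One Zero Star Star One Zero Zero One 0 k.+1 P1 hm C.
  + LF One Zero Zero One Star Star Zero One k.+1 0 P1' hm C.
- move/negbT/eqP: hf => hf.
  refine (conj _ (conj _ (conj _ (conj I I)))).
  + LF Star Star Zero One One Zero Zero One k.+1 0 P1 hm C.
  + LF One Zero Zero One One Zero Star Star 0 k.+1 P1' hm C.
  + LF One Zero Star Star Star Star Star Star k.+3 0 P1' hm C.
Qed.

Lemma block_odd1 n C : odd n -> clen C = 1 -> chainP (Inv n.+2) (rho n C).
Proof.
move=> hn hm; have hn2 : n %% 2 = 1 by rewrite modn2 hn.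
rewrite /rho /lam hn /= hm /= !fC_fS !lC_lS -hm.
case: ifP => hf /=.
- move/eqP: hf => hf.
  refine (conj _ (conj _ (conj I I))).
  + LF Star Star Star Star One Zero Star Star 1 0 P1 hm C.
  + LF One Zero Star Star Star Star Zero One 0 0 P3 hm C.
- move/negbT/eqP: hf => hf.
  refine (conj _ (conj _ (conj I I))).
  + LF Star Star Zero One One Zero Star Star 0 0 P3' hm C.
  + LF One Zero Star Star Star Star Star Star 1 0 P1' hm C.
Qed.

Lemma block_even n C k : ~~ odd n -> clen C = k.+2 -> chainP (Inv n.+2) (rho n C).
Proof.
move=> hn hm; have hn2 : n %% 2 = 0 by rewrite modn2 (negbTE hn).
rewrite /rho /lam hn /= hm /= !fC_fS !lC_lS -hm.
case: ifP => hf /=.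
- move/eqP: hf => hf.
  refine (conj _ (conj _ (conj _ (conj I I)))).
  + FL Star Star Star Star Zero One Star Star 0 k.+2 P1 hm C.
  + FL Zero One Star Star Zero One One Zero k 0 P1 hm C.
  + FL Zero One One Zero Star Star One Zero 0 k P1' hm C.
- move/negbT/eqP: hf => hf.
  refine (conj _ (conj _ (conj _ (conj I I)))).
  + FL Star Star One Zero Zero One One Zero 0 k P1 hm C.
  + FL Zero One One Zero Zero One Star Star k 0 P1' hm C.
  + FL Zero One Star Star Star Star Star Star 0 k.+2 P1' hm C.
Qed.

Lemma block_even0 n C : ~~ odd n -> clen C = 0 -> chainP (Inv n.+2) (rho n C).
Proof.
move=> hn hm; have hn2 : n %% 2 = 0 by rewrite modn2 (negbTE hn).
rewrite /rho /lam hn /= hm /= lam0 // -hm.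
case: ifP => hf /=.
- refine (conj _ (conj I I)).
  FL Star Star Star Star Star Star One Zero 0 0 P1 hm C.
- refine (conj _ (conj I I)).
  FL Star Star One Zero Star Star Star Star 0 0 P1' hm C.
Qed.


Lemma chainP_cat R s1 s2 : chainP R s1 -> chainP R s2 ->
  (s1 != [::] -> s2 != [::] -> R (last [::] s1) (head [::] s2)) -> chainP R (s1 ++ s2).
Proof.
elim: s1 => [|x s1 IH] //= [h1 h2] h3 hl.
split.
  case: s1 {IH} h1 h2 hl => [|z s1] h1 h2 hl /=; last by [].
  by case: s2 h3 hl => [|y s2] //= h3 hl; apply: hl.
apply: IH => // ne1 ne2; case: s1 ne1 h1 h2 hl => [|z s1] //= _ h1 h2 hl.
exact: hl.
Qed.

Lemma chainP_flatten (R R' : chain -> chain -> Prop) (Q : pred chain) F L :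
  (forall C, Q C -> F C != [::]) ->
  (forall C, Q C -> chainP R (F C)) ->
  (forall C C', Q C -> Q C' -> R' C C' -> R (last [::] (F C)) (head [::] (F C'))) ->
  all Q L -> chainP R' L -> chainP R (flatten (map F L)).
Proof.
move=> hne hch hl; elim: L => [|C L IH] //= /andP [qC qL] [h1 h2].
apply: chainP_cat => //; first exact: hch.
  exact: IH.
move=> _; case: L qL h1 h2 {IH} => [|C' L] //= /andP [qC' _] h1 _ _.
have := hne C' qC'; have := hl C C' qC qC' h1.
by case: (F C') => [|y s].
Qed.

Lemma chainP_gray R s : chainP R s -> (forall A B, R A B -> ndiff A B <= 3) ->
  gray_code 3 s.
Proof.
move=> hc hR i; elim: s hc i => [|x s IH] //= [h1 h2] [|i] hi.
  by case: s h1 h2 hi IH => [|y s] //= h1 _ _ _; apply: hR.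
exact: IH.
Qed.


Lemma even_lt2 C n : odd (clen C) = odd n -> ~~ odd n -> (2 <= clen C) = false -> clen C = 0.
Proof.
move=> hp hn; case: (clen C) hp => [|[|m]] //=; by rewrite (negbTE hn).
Qed.

Lemma rho_ends n C : odd (clen C) = odd n ->
  rho n C != [::] /\ head [::] (rho n C) = headR n C /\ last [::] (rho n C) = lastR n C.
Proof.
move=> hp; rewrite /rho /lam /headR /lastR /fwd /gend !fC_fS !lC_lS.
case hn: (odd n) => /=; case: ifP => _; case: ifP => h2;
  rewrite /rev /=; (try rewrite lam0); repeat split => //;
  by apply: (even_lt2 (n := n)) => //; rewrite hn.
Qed.

Lemma clen01 C : clen (Zero :: rcons C One) = clen C.
Proof. by rewrite /clen /= -cats1 count_cat /= !addn0 add0n. Qed.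

Definition okE (C X : chain) : bool := (size X == (size C).+2) && (odd (clen X) == odd (clen C)).
Arguments okE : simpl never.

Lemma okE_w C : okE C (wrapc C).
Proof. by rewrite /okE size_wrap clen_wrap /= negbK !eqxx. Qed.
Lemma okE_f C : okE C (fS Zero One (wrapc C)).
Proof. by rewrite /okE size_fS size_wrap clen_fS // clen_wrap subn2 !eqxx. Qed.
Lemma okE_l C : okE C (lS One Zero (wrapc C)).
Proof. by rewrite /okE size_lS size_wrap clen_lS // clen_wrap subn2 !eqxx. Qed.
Lemma okE_fl C : 1 < clen C -> okE C (fS Zero One (lS One Zero (wrapc C))).
Proof.
move=> h; rewrite /okE size_fS size_lS size_wrap clen_fS // clen_lS // clen_wrap subn2 /= eqxx /=.
have -> : ((clen C).+2 - 2).-2 = clen C - 2 by lia.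
by rewrite oddB // addbF.
Qed.
Lemma okE_lf C : 1 < clen C -> okE C (lS One Zero (fS Zero One (wrapc C))).
Proof.
move=> h; rewrite /okE size_lS size_fS size_wrap clen_lS // clen_fS // clen_wrap subn2 /= eqxx /=.
have -> : ((clen C).+2 - 2).-2 = clen C - 2 by lia.
by rewrite oddB // addbF.
Qed.
Lemma okE_01 C : okE C (Zero :: rcons C One).
Proof. by rewrite /okE clen01 [size _]/= size_rcons !eqxx. Qed.

Lemma rho_all n C : odd (clen C) = odd n -> all (okE C) (rho n C).
Proof.
move=> hp; rewrite /rho; case: ifP => _; rewrite ?all_rev /lam !fC_fS !lC_lS;
case hn: (odd n) => /=; case: ifP => h2 /=;
by rewrite ?okE_w ?okE_f ?okE_l ?okE_fl ?okE_lf ?okE_01 //; lia.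
Qed.


Lemma block n C : odd (clen C) = odd n -> chainP (Inv n.+2) (rho n C).
Proof.
move=> hp; case hn: (odd n).
- case e: (clen C) => [|[|[|k]]].
  + by move: hp; rewrite e hn.
  + exact: block_odd1.
  + by move: hp; rewrite e hn.
  + by apply: (block_odd (k := k)); rewrite ?hn ?modn2 ?hp ?e.
- case e: (clen C) => [|[|k]].
  + by apply: block_even0; rewrite ?hn.
  + by move: hp; rewrite e hn.
  + by apply: (block_even (k := k)); rewrite ?hn.
Qed.

Definition QL n (C : chain) : bool := (size C == n) && (odd (clen C) == odd n).

Lemma main_step n : chainP (Inv n) (Lambda n) -> all (QL n) (Lambda n) ->
  chainP (Inv n.+2) (Lambda n.+2) /\ all (QL n.+2) (Lambda n.+2).
Proof.
move=> hc ha; rewrite [Lambda n.+2]/=; split.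
  apply: (chainP_flatten (R' := Inv n) (Q := QL n)) => //.
  - by move=> C /andP [_ /eqP hp]; case: (rho_ends hp).
  - by move=> C /andP [_ /eqP hp]; apply: block.
  - move=> C C' /andP [/eqP s1 /eqP p1] /andP [/eqP s2 /eqP p2] hI.
    have [_ [_ ->]] := rho_ends p1; have [_ [-> _]] := rho_ends p2.
    apply: trans => //; by rewrite s1 s2.
elim: (Lambda n) ha {hc} => [|C L IH] //= /andP [qC qL].
rewrite all_cat IH // andbT.
move: qC => /andP [/eqP s1 /eqP p1].
apply: sub_all (rho_all p1) => X /andP [/eqP sX /eqP pX].
by rewrite /QL sX s1 pX p1 /= negbK !eqxx.
Qed.

Lemma main2 n : (chainP (Inv n) (Lambda n) /\ all (QL n) (Lambda n)) /\
      (chainP (Inv n.+1) (Lambda n.+1) /\ all (QL n.+1) (Lambda n.+1)).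
Proof.
elim: n => [|m [[h0 h0'] [h1 h2]]].
  by split; split; rewrite /= ?/QL ?/clen /=.
split; [exact: (conj h1 h2) | exact: main_step].
Qed.

Lemma main n : chainP (Inv n) (Lambda n) /\ all (QL n) (Lambda n).
Proof. by case: (main2 n). Qed.

Theorem theorem23 (n : nat) : 1 <= n -> gray_code 3 (Lambda n).
Proof.
move=> _; have [hc _] := main n.
exact: (chainP_gray hc (fun A B h => @Inv_ndiff n A B h)).
Qed.
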